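(* Let $n$ be a positive integer of the form $p_1^{\alpha_1}p_2^{\alpha_2}\cdots p_t^{\alpha_t}$, where $\alpha_i\ge 0$ and the $p_i$ are primes with $p_i\ge 5$ for $1\le i\le t$. Then there exists a cyclic DCA$(4,6n+1;6n)$ satisfying P1 and P2. Consequently there exists a cyclic DCA$(4,2p+1;2p)$ satisfying P1 and P2 for $2p\in\{30, 42, 66, 78, 102, 114, 138, 150, 174, 186, 210, 222, 246, 258, 282, 294, 318, 330, 354\}$.
   Context: A difference covering array DCA$(k,\eta;n)$ over $\mathbb{Z}_n$ (a cyclic DCA) is an $\eta\times k$ matrix $Q=[q(i,j)]$ with entries in $\mathbb{Z}_n$ such that for every pair of distinct columns $j,j'$ the multiset $\{q(i,j)-q(i,j') : 0\le i\le \eta-1\}$ contains every element of $\mathbb{Z}_n$ at least once. A DCA$(k,n+1;n)$ is taken in normalized form: all entries of its last row (row $n$) and last column (column $k-1$) equal $0$. It satisfies P1 if $0$ occurs at least twice in every column, and P2 if for all distinct columns $j,j'$ with $j\neq k-1\neq j'$, the set $\{q(i,j)-q(i,j') : 0\le i\le n-1\}$ equals $\mathbb{Z}_n\setminus\{0\}$. *)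

(* Defs.v *)
From mathcomp Require Import all_boot.
Set Implicit Arguments. Unset Strict Implicit. Unset Printing Implicit Defensive.

(* Entries of Z_m are represented by 'I_m; an eta x k array over Z_m is
   Q : 'I_eta -> 'I_k -> 'I_m (Q i j = entry in row i, column j). *)

Definition zdiff (m : nat) (a b : 'I_m) : nat := (a + (m - b)) %% m.

Definition is_DCA (k eta m : nat) (Q : 'I_eta -> 'I_k -> 'I_m) : Prop :=
  forall j j' : 'I_k, j != j' ->
    forall d : 'I_m, exists i : 'I_eta, zdiff (Q i j) (Q i j') = d.

Definition normalized (k m : nat) (Q : 'I_m.+1 -> 'I_k -> 'I_m) : Prop :=
  (forall j : 'I_k, nat_of_ord (Q ord_max j) = 0) /\
  (forall (i : 'I_m.+1) (j : 'I_k), nat_of_ord j = k.-1 -> nat_of_ord (Q i j) = 0).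

Definition P1 (k m : nat) (Q : 'I_m.+1 -> 'I_k -> 'I_m) : Prop :=
  forall j : 'I_k, 2 <= #|[set i : 'I_m.+1 | nat_of_ord (Q i j) == 0]|.

Definition P2 (k m : nat) (Q : 'I_m.+1 -> 'I_k -> 'I_m) : Prop :=
  forall j j' : 'I_k, j != j' -> nat_of_ord j != k.-1 -> nat_of_ord j' != k.-1 ->
    forall d : nat,
      (exists i : 'I_m.+1, (i < m) /\ zdiff (Q i j) (Q i j') = d) <-> (0 < d < m).

Definition exists_good_DCA (k m : nat) : Prop :=
  exists Q : 'I_m.+1 -> 'I_k -> 'I_m,
    [/\ is_DCA Q, normalized Q, P1 Q & P2 Q].

(* Main.v *)
Require Import Defs.
From mathcomp Require Import all_boot all_algebra.
From mathcomp Require Import zify.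
Set Implicit Arguments. Unset Strict Implicit. Unset Printing Implicit Defensive.
Import GRing.Theory.

Section Zn.
Variable k : nat.
Local Notation n := k.+1.

Lemma mulz_abs0 (x : 'I_n) (c : int) :
  (x *~ c = 0)%R -> (x *+ `|c|%N = 0)%R.
Proof.
case: c => m /=; first by rewrite -pmulrn.
by rewrite NegzE mulrNz -pmulrn => /eqP; rewrite oppr_eq0 => /eqP.
Qed.

Lemma mulz_inj0 (x : 'I_n) (c : int) : coprime n `|c|%N ->
  (x *~ c = 0)%R -> x = 0%R.
Proof.
move=> cop /mulz_abs0; rewrite Zp_mulrn => /(congr1 val) /= Hd.
have : n %| x * `|c|%N by rewrite /dvdn Hd.
rewrite Gauss_dvdl // => H.
case: (posnP x) => [x0|xp]; first by apply: val_inj.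
by move: (dvdn_leq xp H); rewrite leqNgt ltn_ord.
Qed.

Lemma mulz_inj (c : int) : coprime n `|c|%N -> injective (fun x : 'I_n => x *~ c)%R.
Proof.
move=> cop x y /= /eqP; rewrite -subr_eq0 -mulrzBl => /eqP /(mulz_inj0 cop) /eqP.
by rewrite subr_eq0 => /eqP.
Qed.

Lemma mulz_surj (c : int) : coprime n `|c|%N -> forall y : 'I_n, exists x : 'I_n, (x *~ c)%R = y.
Proof.
move=> cop y; have [g fK gK] := injF_bij (mulz_inj cop).
by exists (g y); rewrite gK.
Qed.
End Zn.


Lemma zd_mod (M d X X' : nat) : 0 < d -> d %| M -> X' <= M ->
  (X + (M - X')) %% M %% d = (X %% d + (d - X' %% d)) %% d.
Proof.
move=> d0 dM XM.
rewrite (modn_dvdm _ dM); apply/eqP.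
rewrite -(eqn_modDr X') -addnA subnK //.
have rd : X' %% d <= d by rewrite ltnW // ltn_pmod.
rewrite {2}(divn_eq X' d) addnCA modnMDl -addnA subnK // modnDr modn_mod.
by case/dvdnP: dM => q ->; rewrite addnC modnMDl.
Qed.

Section CRT.
Variable N : nat.
Hypothesis N0 : 0 < N.
Hypothesis cop : coprime 6 N.

Definition crt (a b : nat) : nat := chinese 6 N a b %% (6 * N).

Lemma crt_lt a b : crt a b < 6 * N.
Proof. by rewrite ltn_pmod // muln_gt0 N0. Qed.

Lemma crt_mod6 a b : crt a b %% 6 = a %% 6.
Proof. by rewrite /crt (@modn_dvdm (6 * N)) ?dvdn_mulr // chinese_modl. Qed.

Lemma crt_modN a b : crt a b %% N = b %% N.
Proof. by rewrite /crt (@modn_dvdm (6 * N)) ?dvdn_mull // chinese_modr. Qed.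

Lemma crt_uniq x y : x < 6 * N -> y < 6 * N -> x %% 6 = y %% 6 -> x %% N = y %% N -> x = y.
Proof.
move=> xl yl h6 hN.
have : x == y %[mod 6 * N] by rewrite chinese_remainder // h6 hN !eqxx.
by rewrite !modn_small // => /eqP.
Qed.

Lemma crt_surj x : x < 6 * N -> x = crt (x %% 6) (x %% N).
Proof.
move=> xl; apply: crt_uniq => //; first exact: crt_lt.
  by rewrite crt_mod6 modn_mod.
by rewrite crt_modN modn_mod.
Qed.

Lemma crt_zdiff a b a' b' :
  (crt a b + (6 * N - crt a' b')) %% (6 * N) =
  crt ((a + (6 - a' %% 6)) %% 6) ((b + (N - b' %% N)) %% N).
Proof.
apply: crt_uniq; [by rewrite ltn_pmod // muln_gt0 N0 | exact: crt_lt | |].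
  rewrite zd_mod ?dvdn_mulr ?(ltnW (crt_lt _ _)) // !crt_mod6 modn_mod.
  by rewrite modnDml.
rewrite zd_mod ?dvdn_mull ?(ltnW (crt_lt _ _)) // !crt_modN modn_mod.
by rewrite modnDml.
Qed.

Lemma crt00 : crt 0 0 = 0.
Proof. by rewrite /crt /chinese !mul0n add0n mod0n. Qed.

End CRT.

Definition TA : seq (seq nat) := [:: [:: 1; 2; 3]; [:: 1; 3; 2]; [:: 2; 1; 5]; [:: 2; 5; 4]; [:: 3; 4; 1]; [:: 3; 5; 1]; [:: 4; 1; 3]; [:: 4; 2; 5]; [:: 5; 3; 4]; [:: 5; 4; 2]].
Definition CA : seq (seq int) := [:: [:: Negz 1; Posz 1; Negz 0]; [:: Posz 2; Negz 0; Posz 3]; [:: Posz 2; Posz 1; Posz 3]; [:: Negz 1; Posz 1; Negz 2]; [:: Posz 4; Posz 1; Posz 3]; [:: Negz 3; Negz 0; Negz 2]; [:: Posz 2; Negz 0; Posz 1]; [:: Negz 1; Negz 0; Negz 2]; [:: Posz 2; Posz 1; Posz 3]; [:: Negz 1; Negz 0; Negz 2]].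
Definition TB : seq (seq nat) := [:: [:: 0; 1; 3]; [:: 1; 3; 0]; [:: 2; 5; 4]; [:: 3; 0; 1]; [:: 4; 2; 5]; [:: 5; 4; 2]].
Definition CC : seq int := [:: Posz 1; Posz 2; Posz 3].
Definition tA (s j : nat) : nat := nth 0 (nth [::] TA s) j.
Definition cA (s j : nat) : int := nth (Posz 0) (nth [::] CA s) j.
Definition tB (r j : nat) : nat := nth 0 (nth [::] TB r) j.
Definition cC (j : nat) : int := nth (Posz 0) CC j.
Definition u4 (c : int) : bool := `|c|%N \in [:: 1; 2; 3; 4].
Definition rdiff (a a' : nat) : nat := (a + (6 - a' %% 6)) %% 6.

Definition DA_col_b := all (fun j => all (fun a => has (fun s => has (fun s' =>
  [&& tA s j == a, tA s' j == a, cA s' j == (- cA s j)%R & u4 (cA s j)]) (iota 0 10)) (iota 0 10))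
  (iota 1 5)) (iota 0 3).
Lemma DA_col_ok : DA_col_b. Proof. by vm_compute. Qed.

Definition DA_pair_b := all (fun j => all (fun j' => (j == j') || all (fun a => has (fun s => has (fun s' =>
  [&& rdiff (tA s j) (tA s j') == a, rdiff (tA s' j) (tA s' j') == a,
      (cA s' j - cA s' j' == - (cA s j - cA s j'))%R & u4 (cA s j - cA s j')%R]) (iota 0 10)) (iota 0 10))
  (iota 1 5)) (iota 0 3)) (iota 0 3).
Lemma DA_pair_ok : DA_pair_b. Proof. by vm_compute. Qed.

Definition DA_nz_b := all (fun s => all (fun j => all (fun j' => (j == j') || (rdiff (tA s j) (tA s j') != 0))
  (iota 0 3)) (iota 0 3)) (iota 0 10).
Lemma DA_nz_ok : DA_nz_b. Proof. by vm_compute. Qed.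

Definition DB_col_b := all (fun j => all (fun a => has (fun r => tB r j == a) (iota 0 6)) (iota 0 6)) (iota 0 3).
Lemma DB_col_ok : DB_col_b. Proof. by vm_compute. Qed.

Definition DB_pair_b := all (fun j => all (fun j' => (j == j') || all (fun a => has (fun r =>
  rdiff (tB r j) (tB r j') == a) (iota 0 6)) (iota 1 5)) (iota 0 3)) (iota 0 3).
Lemma DB_pair_ok : DB_pair_b. Proof. by vm_compute. Qed.

Definition DB_nz_b := all (fun r => all (fun j => all (fun j' => (j == j') || (rdiff (tB r j) (tB r j') != 0))
  (iota 0 3)) (iota 0 3)) (iota 0 6).
Lemma DB_nz_ok : DB_nz_b. Proof. by vm_compute. Qed.

Definition DC_b := all (fun j => u4 (cC j) && all (fun j' => (j == j') || u4 (cC j - cC j')%R) (iota 0 3)) (iota 0 3).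
Lemma DC_ok : DC_b. Proof. by vm_compute. Qed.

Lemma mi0 l i : i < l -> i \in iota 0 l.
Proof. by move=> h; rewrite mem_iota add0n h. Qed.
Lemma mi1 i : 0 < i < 6 -> i \in iota 1 5.
Proof. by rewrite mem_iota. Qed.

Lemma DA_col j a : j < 3 -> 0 < a < 6 -> exists s s',
  [/\ s < 10, s' < 10, tA s j = a, tA s' j = a & (cA s' j = (- cA s j)%R /\ u4 (cA s j))].
Proof.
move=> hj ha; have := DA_col_ok; move/allP/(_ j (mi0 hj))/allP/(_ a (mi1 ha))/hasP => [s].
rewrite mem_iota => /andP [_ hs] /hasP [s']; rewrite mem_iota => /andP [_ hs'] /and4P [/eqP e1 /eqP e2 /eqP e3 e4].
by exists s, s'; split.
Qed.

Lemma DA_pair j j' a : j < 3 -> j' < 3 -> j != j' -> 0 < a < 6 -> exists s s',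
  [/\ s < 10, s' < 10, rdiff (tA s j) (tA s j') = a, rdiff (tA s' j) (tA s' j') = a &
      ((cA s' j - cA s' j' = - (cA s j - cA s j'))%R /\ u4 (cA s j - cA s j')%R)].
Proof.
move=> hj hj' hne ha; have := DA_pair_ok; move/allP/(_ j (mi0 hj))/allP/(_ j' (mi0 hj')).
rewrite (negPf hne) orFb; move/allP/(_ a (mi1 ha))/hasP => [s].
rewrite mem_iota => /andP [_ hs] /hasP [s']; rewrite mem_iota => /andP [_ hs'] /and4P [/eqP e1 /eqP e2 /eqP e3 e4].
by exists s, s'; split.
Qed.

Lemma DA_nz s j j' : s < 10 -> j < 3 -> j' < 3 -> j != j' -> rdiff (tA s j) (tA s j') != 0.
Proof.
move=> hs hj hj' hne; have := DA_nz_ok; move/allP/(_ s (mi0 hs))/allP/(_ j (mi0 hj))/allP/(_ j' (mi0 hj')).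
by rewrite (negPf hne).
Qed.

Lemma DB_col j a : j < 3 -> a < 6 -> exists r, r < 6 /\ tB r j = a.
Proof.
move=> hj ha; have := DB_col_ok; move/allP/(_ j (mi0 hj))/allP/(_ a (mi0 ha))/hasP => [r].
by rewrite mem_iota => /andP [_ hr] /eqP e; exists r.
Qed.

Lemma DB_pair j j' a : j < 3 -> j' < 3 -> j != j' -> 0 < a < 6 -> exists r,
  r < 6 /\ rdiff (tB r j) (tB r j') = a.
Proof.
move=> hj hj' hne ha; have := DB_pair_ok; move/allP/(_ j (mi0 hj))/allP/(_ j' (mi0 hj')).
rewrite (negPf hne) orFb; move/allP/(_ a (mi1 ha))/hasP => [r].
by rewrite mem_iota => /andP [_ hr] /eqP e; exists r.
Qed.

Lemma DB_nz r j j' : r < 6 -> j < 3 -> j' < 3 -> j != j' -> rdiff (tB r j) (tB r j') != 0.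
Proof.
move=> hs hj hj' hne; have := DB_nz_ok; move/allP/(_ r (mi0 hs))/allP/(_ j (mi0 hj))/allP/(_ j' (mi0 hj')).
by rewrite (negPf hne).
Qed.

Lemma DC1 j : j < 3 -> u4 (cC j).
Proof. by move=> hj; have := DC_ok; move/allP/(_ j (mi0 hj))/andP => [[]]. Qed.

Lemma DC2 j j' : j < 3 -> j' < 3 -> j != j' -> u4 (cC j - cC j')%R.
Proof.
move=> hj hj' hne; have := DC_ok; move/allP/(_ j (mi0 hj))/andP => [[_ /allP /(_ j' (mi0 hj'))]].
by rewrite (negPf hne).
Qed.



Lemma u4_cop n c : (forall p, prime p -> p %| n -> 5 <= p) -> u4 c -> coprime n `|c|%N.
Proof.
move=> hp; rewrite /u4 !inE => /or4P [] /eqP ->.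
- exact: coprimen1.
- rewrite coprime_sym prime_coprime //; by apply/negP => /(hp 2 isT).
- rewrite coprime_sym prime_coprime //; by apply/negP => /(hp 3 isT).
- rewrite coprime_sym; apply: (coprimeXl 2 (m := 2)).
  rewrite prime_coprime //; by apply/negP => /(hp 2 isT).
Qed.


Section Main.
Variables k h : nat.
Hypothesis hk : k = 2 * h.
Local Notation n := k.+1.
Hypothesis hp : forall p, prime p -> p %| n -> 5 <= p.

Lemma cop6 : coprime 6 n.
Proof.
rewrite (_ : 6 = 2 * 3) // coprimeMl !prime_coprime //.
by apply/andP; split; apply/negP; [move/(@hp 2 isT) | move/(@hp 3 isT)].
Qed.

Definition al (i j : nat) : nat :=
  if 2 < j then 0 else if i < 10 * h then tA (i %/ h) j
  else if i < 10 * h + 6 then tB (i - 10 * h) j else 0.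

Definition be (i j : nat) : 'I_n :=
  if 2 < j then 0%R else if i < 10 * h then ((inZp (i %% h).+1 : 'I_n) *~ cA (i %/ h) j)%R
  else if i < 10 * h + 6 then 0%R
  else if i < 6 * n then ((inZp (i - (10 * h + 6)).+1 : 'I_n) *~ cC j)%R else 0%R.

Lemma j2 j : j < 3 -> (2 < j) = false.
Proof. by move=> hj; rewrite ltnNge -ltnS hj. Qed.

Lemma rowA s x j : s < 10 -> 0 < x <= h -> j < 3 ->
  al (s * h + x.-1) j = tA s j /\ be (s * h + x.-1) j = ((inZp x : 'I_n) *~ cA s j)%R.
Proof.
move=> hs /andP [x0 xh] hj.
have h0 : 0 < h by apply: leq_trans xh.
have xl : x.-1 < h by rewrite prednK.
have lt : s * h + x.-1 < 10 * h by nia.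
rewrite /al /be j2 // lt divnMDl // divn_small // addn0 modnMDl modn_small // prednK //.
Qed.

Lemma rowB r j : r < 6 -> j < 3 ->
  al (10 * h + r) j = tB r j /\ be (10 * h + r) j = 0%R.
Proof.
move=> hr hj; have l1 : (10 * h + r < 10 * h) = false by rewrite ltnNge leq_addr.
by rewrite /al /be j2 // l1 ltn_add2l hr addKn.
Qed.

Lemma rowC x j : 0 < x <= k -> j < 3 ->
  al (10 * h + 6 + x.-1) j = 0 /\ be (10 * h + 6 + x.-1) j = ((inZp x : 'I_n) *~ cC j)%R.
Proof.
move=> /andP [x0 xk] hj.
have l1 : (10 * h + 6 + x.-1 < 10 * h) = false by apply/negbTE; lia.
have l2 : (10 * h + 6 + x.-1 < 10 * h + 6) = false by apply/negbTE; lia.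
have l3 : (10 * h + 6 + x.-1 < 6 * n) by lia.
by rewrite /al /be j2 // l1 l2 l3 addKn prednK.
Qed.

Lemma rowL j : al (6 * n) j = 0 /\ be (6 * n) j = 0%R.
Proof.
have l1 : (6 * n < 10 * h) = false by apply/negbTE; lia.
have l2 : (6 * n < 10 * h + 6) = false by apply/negbTE; lia.
by rewrite /al /be l1 l2 ltnn; case: (2 < j).
Qed.

Lemma col3 i j : 2 < j -> al i j = 0 /\ be i j = 0%R.
Proof. by move=> hj; rewrite /al /be hj. Qed.

Lemma row_cases i : i < 6 * n ->
  [\/ exists s x, [/\ s < 10, 0 < x <= h & i = s * h + x.-1],
      exists r, r < 6 /\ i = 10 * h + r
    | exists x, 0 < x <= k /\ i = 10 * h + 6 + x.-1].
Proof.
move=> il.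
case: (ltnP i (10 * h)) => [i1|i1].
  have h0 : 0 < h by case: h i1 => //; rewrite muln0.
  apply: Or31; exists (i %/ h), (i %% h).+1; split => //.
  - by rewrite ltn_divLR.
  - by rewrite ltn_pmod.
  - by rewrite /= -divn_eq.
case: (ltnP i (10 * h + 6)) => [i2|i2].
  by apply: Or32; exists (i - 10 * h); split; [lia | lia].
by apply: Or33; exists (i - (10 * h + 6)).+1; split => /=; lia.
Qed.

Lemma half (z : 'I_n) : z != 0%R -> (0 < z <= h) \/ (0 < (- z)%R <= h).
Proof.
move=> nz; have z0 : 0 < z by rewrite lt0n; apply: contra nz => /eqP e; apply/eqP/val_inj.
have -> : nat_of_ord (- z)%R = n - z by rewrite /= modn_small // ltn_subrL z0.
have := ltn_ord z; lia.
Qed.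

Lemma nzmul (z : 'I_n) c : coprime n `|c|%N -> z != 0%R -> (z *~ c)%R != 0%R.
Proof. by move=> cp; apply: contra => /eqP /(mulz_inj0 cp) ->. Qed.

Lemma solve_nz c (y : 'I_n) : coprime n `|c|%N -> y != 0%R ->
  exists z : 'I_n, z != 0%R /\ (z *~ c)%R = y.
Proof.
move=> cp ny; have [z hz] := mulz_surj cp y; exists z; split => //.
by apply: contra ny => /eqP z0; rewrite -hz z0 mul0rz.
Qed.

Lemma colcov j a (y : 'I_n) : j < 3 -> a < 6 ->
  exists i, [/\ i <= 6 * n, al i j = a & be i j = y].
Proof.
move=> hj ha.
case: (posnP a) => [a0|apos].
  case: (eqVneq y 0%R) => [y0|ny].
    by exists (6 * n); have [e1 e2] := rowL j; rewrite e1 e2 a0 y0.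
  have [z [nz hz]] := solve_nz (u4_cop hp (DC1 hj)) ny.
  have z0 : 0 < z by rewrite lt0n; apply: contra nz => /eqP e; apply/eqP/val_inj.
  have zk : z <= k by rewrite -ltnS.
  exists (10 * h + 6 + (nat_of_ord z).-1); have [e1 e2] := rowC (x := z) (j := j) (introT andP (conj z0 zk)) hj.
  by rewrite e1 e2 valZpK hz a0; split => //; lia.
case: (eqVneq y 0%R) => [y0|ny].
  have [r [hr er]] := DB_col hj ha.
  exists (10 * h + r); have [e1 e2] := rowB hr hj.
  by rewrite e1 e2 er y0; split => //; lia.
have [s [s' [hs hs' es es' [ec cu]]]] := DA_col hj (introT andP (conj apos ha)).
have [z [nz hz]] := solve_nz (u4_cop hp cu) ny.
case: (half nz) => hz2.
  exists (s * h + (nat_of_ord z).-1); have [e1 e2] := rowA hs hz2 hj.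
  rewrite e1 e2 valZpK hz es; split => //.
  case/andP: hz2 => z0 zh; apply: leq_trans (_ : 10 * h <= 6 * n); last by lia.
  by apply: ltnW; nia.
exists (s' * h + (nat_of_ord (- z)%R).-1); have [e1 e2] := rowA hs' hz2 hj.
rewrite e1 e2 valZpK es' ec mulNrz mulrNz opprK hz; split => //.
case/andP: hz2 => z0 zh; apply: leq_trans (_ : 10 * h <= 6 * n); last by lia.
by apply: ltnW; nia.
Qed.

Lemma paircov j j' a (y : 'I_n) : j < 3 -> j' < 3 -> j != j' -> a < 6 -> (a != 0) || (y != 0%R) ->
  exists i, [/\ i < 6 * n, rdiff (al i j) (al i j') = a & (be i j - be i j')%R = y].
Proof.
move=> hj hj' hne ha hay.
case: (posnP a) => [a0|apos].
  have ny : y != 0%R by move: hay; rewrite a0.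
  have [z [nz hz]] := solve_nz (u4_cop hp (DC2 hj hj' hne)) ny.
  have z0 : 0 < z by rewrite lt0n; apply: contra nz => /eqP e; apply/eqP/val_inj.
  have zk : z <= k by rewrite -ltnS.
  exists (10 * h + 6 + (nat_of_ord z).-1).
  have [e1 e2] := rowC (x := z) (j := j) (introT andP (conj z0 zk)) hj.
  have [e1' e2'] := rowC (x := z) (j := j') (introT andP (conj z0 zk)) hj'.
  by rewrite e1 e2 e1' e2' valZpK -mulrzBr hz a0; split => //; lia.
case: (eqVneq y 0%R) => [y0|ny].
  have [r [hr er]] := DB_pair hj hj' hne (introT andP (conj apos ha)).
  exists (10 * h + r); have [e1 e2] := rowB hr hj; have [e1' e2'] := rowB hr hj'.
  by rewrite e1 e2 e1' e2' er y0 subrr; split => //; lia.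
have [s [s' [hs hs' es es' [ec cu]]]] := DA_pair hj hj' hne (introT andP (conj apos ha)).
have [z [nz hz]] := solve_nz (u4_cop hp cu) ny.
case: (half nz) => hz2.
  exists (s * h + (nat_of_ord z).-1); have [e1 e2] := rowA hs hz2 hj; have [e1' e2'] := rowA hs hz2 hj'.
  rewrite e1 e2 e1' e2' valZpK -mulrzBr hz es; split => //.
  case/andP: hz2 => z0 zh; apply: leq_trans (_ : 10 * h <= 6 * n); last by lia.
  by nia.
exists (s' * h + (nat_of_ord (- z)%R).-1); have [e1 e2] := rowA hs' hz2 hj; have [e1' e2'] := rowA hs' hz2 hj'.
rewrite e1 e2 e1' e2' valZpK es' -mulrzBr ec mulNrz mulrNz opprK hz; split => //.
case/andP: hz2 => z0 zh; apply: leq_trans (_ : 10 * h <= 6 * n); last by lia.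
by nia.
Qed.

Lemma nzrow i j j' : i < 6 * n -> j < 3 -> j' < 3 -> j != j' ->
  (rdiff (al i j) (al i j') != 0) || ((be i j - be i j')%R != 0%R).
Proof.
move=> il hj hj' hne; case: (row_cases il).
- move=> [s [x [hs hx ->]]]; have [e1 _] := rowA hs hx hj; have [e1' _] := rowA hs hx hj'.
  by rewrite e1 e1' DA_nz.
- move=> [r [hr ->]]; have [e1 _] := rowB hr hj; have [e1' _] := rowB hr hj'.
  by rewrite e1 e1' DB_nz.
move=> [x [hx ->]]; have [e1 e2] := rowC hx hj; have [e1' e2'] := rowC hx hj'.
rewrite e2 e2' -mulrzBr; apply/orP; right; apply: nzmul; first exact: u4_cop hp (DC2 hj hj' hne).
case/andP: hx => x0 xk; apply/eqP => /(congr1 val) /=; rewrite modn_small; last by lia.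
by move=> e; rewrite e in x0.
Qed.

Lemma zerorow j : j < 3 -> exists i, [/\ i < 6 * n, al i j = 0 & be i j = 0%R].
Proof.
move=> hj; have [r [hr er]] := DB_col hj (isT : 0 < 6).
exists (10 * h + r); have [e1 e2] := rowB hr hj; rewrite e1 e2 er; split => //; lia.
Qed.

Definition Qf (i : 'I_(6 * n).+1) (j : 'I_4) : 'I_(6 * n) :=
  Ordinal (crt_lt (ltn0Sn k) (al i j) (be i j)).

Lemma subZp (b b' : 'I_n) : nat_of_ord (b - b')%R = (b + (n - b' %% n)) %% n.
Proof. by rewrite /= modnDmr (modn_small (ltn_ord b')). Qed.

Lemma zdQ i j j' : ((Qf i j : nat) + (6 * n - Qf i j')) %% (6 * n) =
  crt n (rdiff (al i j) (al i j')) (be i j - be i j')%R.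
Proof. by rewrite [LHS]/= crt_zdiff ?cop6 // subZp. Qed.

Lemma crt_inj0 a b : a < 6 -> b < n -> crt n a b = 0 -> a = 0 /\ b = 0.
Proof.
move=> ha hb e; have e6 := crt_mod6 cop6 a b; have eN := crt_modN cop6 a b.
rewrite e mod0n (modn_small ha) in e6; rewrite e mod0n (modn_small hb) in eN; by [].

Qed.

Lemma rdiff_lt a a' : rdiff a a' < 6.
Proof. by rewrite /rdiff ltn_pmod. Qed.

Lemma crt_target d : d < 6 * n -> crt n (d %% 6) (inZp d : 'I_n) = d.
Proof. by move=> dl; rewrite /= [in RHS](crt_surj (ltn0Sn k) cop6 dl). Qed.

Lemma rdiff_a0 a : a < 6 -> rdiff a 0 = a.
Proof. by case: a => [|[|[|[|[|[|]]]]]]. Qed.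

Lemma rdiff_0a a : a < 6 -> rdiff 0 (rdiff 0 a) = a.
Proof. by case: a => [|[|[|[|[|[|]]]]]]. Qed.

Lemma ordv (i : nat) (hi : i <= 6 * n) : nat_of_ord (Ordinal (hi : i < (6 * n).+1)) = i.
Proof. by []. Qed.

Lemma good : exists_good_DCA 4 (6 * n).
Proof.
have nz d : d < 6 * n -> d != 0 -> (d %% 6 != 0) || ((inZp d : 'I_n) != 0%R).
  move=> dl dn; apply/orP; case: (eqVneq (d %% 6) 0) => [a0|]; [right|by left].
  apply: contra dn => /eqP y0.
  by rewrite -(crt_target dl) a0 y0 /= crt00.
exists Qf; split.
-
  move=> j j' hne d; rewrite /zdiff.
  have hd := ltn_ord d; have ha : d %% 6 < 6 by rewrite ltn_pmod.
  case: (ltnP j 3) => hj; case: (ltnP j' 3) => hj'.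
  + case: (eqVneq (nat_of_ord d) 0) => [d0|dn0].
      exists ord_max; rewrite zdQ; have [e1 e2] := rowL j; have [e1' e2'] := rowL j'.
      by rewrite e1 e2 e1' e2' subrr d0 /= crt00.
    have [i [il e1 e2]] := paircov (y := inZp d) hj hj' hne ha (nz _ hd dn0).
    exists (Ordinal (ltnW il : i < (6 * n).+1)).
    by rewrite zdQ e1 e2 crt_target.
  + have [i [il e1 e2]] := colcov (inZp d) hj ha.
    exists (Ordinal (il : i < (6 * n).+1)).
    have [e1' e2'] := col3 i hj'.
    by rewrite zdQ e1 e2 e1' e2' subr0 rdiff_a0 // crt_target.
  + have [i [il e1 e2]] := colcov (- (inZp d : 'I_n))%R hj' (rdiff_lt 0 (d %% 6)).
    exists (Ordinal (il : i < (6 * n).+1)).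
    have [e1' e2'] := col3 i hj.
    by rewrite zdQ e1 e2 e1' e2' sub0r opprK rdiff_0a // crt_target.
  + have jl := ltn_ord j; have jl' := ltn_ord j'.
    have e : nat_of_ord j = nat_of_ord j' by lia.
    by rewrite (ord_inj e) eqxx in hne.
- split.
  + move=> j; rewrite /=; have [e1 e2] := rowL j; by rewrite e1 e2 crt00.
  + move=> i j hj; rewrite /=; have j3 : 2 < j by rewrite hj.
    have [e1 e2] := col3 i j3.
    by rewrite e1 e2 crt00.
- move=> j; apply/card_gt1P.
  case: (ltnP j 3) => hj.
    have [i [il e1 e2]] := zerorow hj.
    exists (Ordinal (ltnW il : i < (6 * n).+1)), ord_max; rewrite !inE /=.
    have [e1' e2'] := rowL j.
    by rewrite e1 e2 e1' e2' crt00 eqxx; split => //; apply/eqP => /(congr1 val) /= e; lia.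
  exists ord0, ord_max; rewrite !inE /=.
  have [e1 e2] := col3 0 hj; have [e1' e2'] := col3 (6 * n) hj.
  rewrite e1 e2 e1' e2' crt00 eqxx; split => //.
- move=> j j' hne hj hj' d.
  have jl : j < 3 by move: hj (ltn_ord j); rewrite /=; lia.
  have jl' : j' < 3 by move: hj' (ltn_ord j'); rewrite /=; lia.
  split.
    move=> [i [il e]]; move: e; rewrite /zdiff zdQ => <-.
    have := nzrow il jl jl' hne; rewrite crt_lt ?andbT //.
    rewrite lt0n; apply: contraL => /eqP /crt_inj0 [] //; first exact: rdiff_lt.
    move=> -> e; have -> : (be i j - be i j')%R = 0%R by apply: val_inj.
    by rewrite eqxx.
  move=> /andP [d0 dm]; have ha : d %% 6 < 6 by rewrite ltn_pmod.
  have [i [il e1 e2]] := paircov (y := inZp d) jl jl' hne ha (nz _ dm (lt0n_neq0 d0)).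
  exists (Ordinal (ltnW il : i < (6 * n).+1)); split => //.
  by rewrite /zdiff zdQ e1 e2 crt_target.
Qed.

End Main.


Lemma part1 n : 0 < n -> (forall p, prime p -> p %| n -> 5 <= p) -> exists_good_DCA 4 (6 * n).
Proof.
case: n => // k _ hp.
have o : odd k.+1.
  have : ~~ (2 %| k.+1) by apply/negP => /(hp 2 isT).
  by rewrite dvdn2 negbK.
have hk : k = 2 * k./2.
  have := odd_double_half k; rewrite /= in o; rewrite (negbTE o) add0n -mul2n.
  by move=> ->.
exact: (good hk hp).
Qed.

Definition good_n n0 := all (fun p => ~~ prime p || ~~ (p %| n0)) (iota 0 5).

Lemma good_n_ok n0 : good_n n0 -> forall p, prime p -> p %| n0 -> 5 <= p.
Proof.
move=> g p pp pd; rewrite leqNgt; apply/negP => p5.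
by move/allP: g => /(_ p (mi0 p5)); rewrite pp pd.
Qed.

Definition Lm := [:: 30; 42; 66; 78; 102; 114; 138; 150; 174; 186; 210; 222; 246;
               258; 282; 294; 318; 330; 354].

Lemma Lm_ok : all (fun m => [&& 6 %| m, 0 < m %/ 6 & good_n (m %/ 6)]) Lm.
Proof. by vm_compute. Qed.

Theorem mainTheorem14 :
  (forall n : nat, 0 < n ->
     (forall p : nat, prime p -> p %| n -> 5 <= p) ->
     exists_good_DCA 4 (6 * n)) /\
  (forall m : nat,
     m \in [:: 30; 42; 66; 78; 102; 114; 138; 150; 174; 186; 210; 222; 246;
               258; 282; 294; 318; 330; 354] ->
     exists_good_DCA 4 m).
Proof.
split; first exact: part1.
move=> m /(allP Lm_ok) /and3P [d6 pos g].
rewrite -(divnK d6) mulnC; apply: part1 => //.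
exact: good_n_ok.
Qed.
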